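(* Let $G$ be a graph on $n$ vertices, $t\ge 1$ an integer, and let $G'$, $\alpha$, $\beta$ be as in the construction below, with $k=n+t+1$ and $\ell=2t+2t^2$. If $\mathcal{C}_k(G')$ contains a path from $\alpha$ to $\beta$ of length at most $\ell$, then $G$ has an independent set of size at least $t-1$.
   Context: Construction: with $V(G)=\{v_1,\ldots,v_n\}$, $V(G')=V_G\cup V_B\cup V_C$, where $V_G=\{g_1,\ldots,g_n\}$ induces a copy of $G$ ($g_ig_j$ an edge iff $v_iv_j\in E(G)$); $V_B=\{b^i_j\mid i,j\in\{1,\ldots,t\}\}$ with $b^i_jb^{i'}_{j'}$ an edge iff $i\ne i'$ and $j\ne j'$; all edges between $V_G$ and $V_B$ are present; $V_C=C_1\cup\cdots\cup C_{n+t+1}$ with the $C_i$ pairwise disjoint independent sets of size $2t+2t^2$ and no edges among vertices of $V_C$; each $g_i$ is adjacent to all of $V_C\setminus(C_i\cup C_{n+t+1})$; each vertex of $V_B$ is adjacent to all of $C_{n+t+1}$; no other edges. $\alpha(g_i)=i$, $\alpha(c)=i$ for $c\in C_i$, $\alpha(b^i_j)=n+i$; $\beta(v)=\alpha(v)$ for $v\in V_G\cup V_C$ and $\beta(b^i_j)=n+j$. A $k$-coloring is a map $V\to\{1,\ldots,k\}$ with adjacent vertices colored differently; $\mathcal{C}_k(G')$ is the graph on the $k$-colorings of $G'$, two adjacent iff they differ on exactly one vertex. *)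

(* Defs.v *)
From mathcomp Require Import all_boot.
Set Implicit Arguments. Unset Strict Implicit. Unset Printing Implicit Defensive.

(* Vertices of G' (0-based indices):
   inl (inl i)        = g_{i+1}                 (i : 'I_n)
   inl (inr (i, j))   = b^{i+1}_{j+1}           (i j : 'I_t)
   inr (m, x)         = the x-th element of C_{m+1}  (m : 'I_(n+t+1), x : 'I_(2t+2t^2)) *)
Definition vertG' (n t : nat) : finType :=
  (('I_n + ('I_t * 'I_t)) + ('I_(n + t + 1) * 'I_(2 * t + 2 * t ^ 2)))%type.

Definition adjG' (n t : nat) (e : rel 'I_n) (u v : vertG' n t) : bool :=
  match u, v with
  | inl (inl i), inl (inl j) => e i j
  | inl (inr (i, j)), inl (inr (i', j')) => (i != i') && (j != j')
  | inl (inl _), inl (inr _) | inl (inr _), inl (inl _) => true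
  | inl (inl i), inr (m, _) | inr (m, _), inl (inl i) =>
      (val m != val i) && (val m != n + t)
  | inl (inr _), inr (m, _) | inr (m, _), inl (inr _) => val m == n + t
  | inr _, inr _ => false
  end.

(* k-colorings with k = n+t+1 (type 'I_(n+t).+1); colors {1..k} encoded as 'I_k = {0..k-1} (color c <-> c-1). *)
Definition coloring (n t : nat) := {ffun vertG' n t -> 'I_(n + t).+1}.

Definition proper (n t : nat) (e : rel 'I_n) (f : coloring n t) : bool :=
  [forall u, forall v, adjG' e u v ==> (f u != f v)].

Definition recolor_adj (n t : nat) (f g : coloring n t) : bool :=
  #|[set v | f v != g v]| == 1.

Definition alpha (n t : nat) : coloring n t :=
  [ffun v => match v with
             | inl (inl i) => @inord (n + t) (val i)
             | inl (inr (i, _)) => @inord (n + t) (n + val i)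
             | inr (m, _) => @inord (n + t) (val m)
             end].

Definition beta (n t : nat) : coloring n t :=
  [ffun v => match v with
             | inl (inl i) => @inord (n + t) (val i)
             | inl (inr (_, j)) => @inord (n + t) (n + val j)
             | inr (m, _) => @inord (n + t) (val m)
             end].

(* a walk alpha = f_0, f_1, ..., f_L = beta in C_k(G') with L edges (s = [f_1;...;f_L]) *)
Definition reconf_path (n t : nat) (e : rel 'I_n) (s : seq (coloring n t)) : bool :=
  [&& all (proper e) (alpha n t :: s),
      path (@recolor_adj n t) (alpha n t) s &
      last (alpha n t) s == beta n t].

Definition independent (n : nat) (e : rel 'I_n) (S : {set 'I_n}) : bool :=
  [forall x in S, forall y in S, ~~ e x y].

(* Main.v *)
Require Import Defs.
From mathcomp Require Import all_boot.
From mathcomp Require Import zify.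
Set Implicit Arguments. Unset Strict Implicit. Unset Printing Implicit Defensive.
Section Grid.
Variables (t : nat) (K : finType).
Implicit Types (h : 'I_t -> 'I_t -> K).

Definition Bprop h := forall r r' c c', r != r' -> c != c' -> h r c != h r' c'.
Definition rowA h r := [exists c1, exists c2, (c1 != c2) && (h r c1 == h r c2)].
Definition colA h c := [exists r1, exists r2, (r1 != r2) && (h r1 c == h r2 c)].
Definition cset h : {set K} := [set x | [exists r, exists c, h r c == x]].

Lemma card_disj (A B X : {set K}) : A \subset X -> B \subset X -> [disjoint A & B] ->
  #|A| + #|B| <= #|X|.
Proof.
move=> HA HB HD; rewrite -cardsUI (disjoint_setI0 HD) cards0 addn0.
by apply: subset_leq_card; rewrite subUset HA HB.
Qed.

Lemma bsame h r1 r2 c c' : Bprop h -> r1 != r2 -> h r1 c = h r2 c' -> c = c'.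
Proof.
move=> HB ne E; apply/eqP; apply: contraT => nc; move: (HB _ _ _ _ ne nc); by rewrite E eqxx.
Qed.

Lemma bsame2 h r r' c1 c2 : Bprop h -> c1 != c2 -> h r c1 = h r' c2 -> r = r'.
Proof.
move=> HB ne E; apply/eqP; apply: contraT => nr; move: (HB _ _ _ _ nr ne); by rewrite E eqxx.
Qed.

Lemma rowpin h r c1 c2 r' d : Bprop h -> c1 != c2 -> h r c1 = h r c2 ->
  h r c1 = h r' d -> r' = r.
Proof.
move=> HB ne E1 E2; apply/eqP; apply: contraT => nr.
have e1 := bsame HB (nr : r' != r) (esym E2).
have e2 : d = c2 by apply: (bsame HB nr); rewrite -E2 E1.
by move: ne; rewrite -e1 e2 eqxx.
Qed.

Lemma colpin h c r1 r2 r' d : Bprop h -> r1 != r2 -> h r1 c = h r2 c ->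
  h r1 c = h r' d -> d = c.
Proof.
move=> HB ne E1 E2; apply/eqP; apply: contraT => nc.
have e1 := bsame2 HB (nc : d != c) (esym E2).
have e2 : r' = r2 by apply: (bsame2 HB nc); rewrite -E2 E1.
by move: ne; rewrite -e1 e2 eqxx.
Qed.

Lemma cross h r0 c0 : Bprop h -> ~~ rowA h r0 -> ~~ colA h c0 ->
  t + (t - 1) <= #|cset h|.
Proof.
move=> HB Hr Hc.
have injr : injective (h r0).
  move=> c1 c2 E; apply/eqP; apply: contraT => ne; case/negP: Hr.
  by apply/existsP; exists c1; apply/existsP; exists c2; rewrite ne E eqxx.
have injc : injective (h ^~ c0).
  move=> c1 c2 E; apply/eqP; apply: contraT => ne; case/negP: Hc.
  by apply/existsP; exists c1; apply/existsP; exists c2; rewrite ne /= E eqxx.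
have -> : t - 1 = #|[set h r c0 | r in [set~ r0]]|.
  by rewrite card_imset // cardsC1 card_ord subn1.
have {1}-> : t = #|[set h r0 c | c : 'I_t]| by rewrite card_imset // card_ord.
apply: card_disj.
- by apply/subsetP => x /imsetP [c _ ->]; rewrite inE; apply/existsP; exists r0;
    apply/existsP; exists c.
- by apply/subsetP => x /imsetP [c _ ->]; rewrite inE; apply/existsP; exists c;
    apply/existsP; exists c0.
apply/pred0P => x /=; apply/negbTE/negP => /andP [] /imsetP [c _ ->] /imsetP [r]; rewrite !inE => nr E.
case: (eqVneq c c0) => [ec|nc].
  have er : r = r0 by apply: injc => /=; rewrite -E ec.
  by move: nr; rewrite er eqxx.
have nr0 : r0 != r by rewrite eq_sym.
by move: (HB _ _ _ _ nr0 nc); rewrite E eqxx.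
Qed.

Definition rw h r : 'I_t := odflt r [pick c1 | [exists c2, (c1 != c2) && (h r c1 == h r c2)]].
Definition cw h c : 'I_t := odflt c [pick r1 | [exists r2, (r1 != r2) && (h r1 c == h r2 c)]].

Lemma rwP h r : rowA h r -> exists c2, (rw h r != c2) /\ h r (rw h r) = h r c2.
Proof.
rewrite /rw; case: pickP => [c1 /existsP [c2 /andP [H1 /eqP H2]] _ | H].
  by exists c2.
move=> /existsP [c1 /existsP [c2 Hc]]; move: (H c1) => /negbT /existsPn /(_ c2).
by rewrite Hc.
Qed.

Lemma cwP h c : colA h c -> exists r2, (cw h c != r2) /\ h (cw h c) c = h r2 c.
Proof.
rewrite /cw; case: pickP => [c1 /existsP [c2 /andP [H1 /eqP H2]] _ | H].
  by exists c2.
move=> /existsP [c1 /existsP [c2 Hc]]; move: (H c1) => /negbT /existsPn /(_ c2).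
by rewrite Hc.
Qed.

Lemma act_count h : Bprop h ->
  #|[set r | rowA h r]| + #|[set c | colA h c]| <= #|cset h|.
Proof.
move=> HB.
have -> : #|[set r | rowA h r]| = #|[set h r (rw h r) | r in [set r | rowA h r]]|.
  rewrite card_in_imset // => r1 r2; rewrite !inE => /rwP [c1 [n1 E1]] /rwP [c2 [n2 E2]] E.
  by symmetry; apply: (rowpin HB n1 E1); exact: E.
have -> : #|[set c | colA h c]| = #|[set h (cw h c) c | c in [set c | colA h c]]|.
  rewrite card_in_imset // => r1 r2; rewrite !inE => /cwP [c1 [n1 E1]] /cwP [c2 [n2 E2]] E.
  by symmetry; apply: (colpin HB n1 E1); exact: E.
apply: card_disj.
- by apply/subsetP => x /imsetP [c _ ->]; rewrite inE; apply/existsP; exists c;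
    apply/existsP; exists (rw h c).
- by apply/subsetP => x /imsetP [c _ ->]; rewrite inE; apply/existsP; exists (cw h c);
    apply/existsP; exists c.
apply/pred0P => x /=; apply/negbTE/negP => /andP [] /imsetP [r]; rewrite inE => /rwP [c1 [n1 E1]] -> /imsetP [c].
rewrite inE => /cwP [r2 [n2 E2]] E.
have a1 := rowpin HB n1 E1 E.
have a2 : r2 = r by apply: (rowpin HB n1 E1); rewrite E E2.
by move: n2; rewrite a1 a2 eqxx.
Qed.

End Grid.
Section Main.
Variables (n t : nat) (e : rel 'I_n).
Local Notation V := (vertG' n t).
Local Notation col := (coloring n t).
Definition gv (i : 'I_n) : V := inl (inl i).
Definition bv (r c : 'I_t) : V := inl (inr (r, c)).
Definition hB (f : col) : 'I_t -> 'I_t -> 'I_(n + t).+1 := fun r c => f (bv r c).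
Definition SG (f : col) : {set 'I_n} := [set i | val (f (gv i)) == n + t].

Lemma prop_adj (f : col) (u v : V) : Defs.proper e f -> adjG' e u v -> f u != f v.
Proof. by move=> /forallP /(_ u) /forallP /(_ v) /implyP. Qed.

Lemma Bprop_hB (f : col) : Defs.proper e f -> Bprop (hB f).
Proof. by move=> Hp r r' c c' nr nc; apply: prop_adj Hp _; rewrite /= nr nc. Qed.

Fixpoint chg (f0 : col) (s : seq col) : {set V} :=
  if s is f1 :: s' then [set v | f0 v != f1 v] :|: chg f1 s' else set0.

Lemma chg_card f0 s : path (@recolor_adj n t) f0 s -> #|chg f0 s| <= size s.
Proof.
elim: s f0 => [|f1 s IH] f0 /=; first by rewrite cards0.
move=> /andP [/eqP H1 Hp]; rewrite cardsU H1.
by apply: leq_trans (leq_subr _ _) _; rewrite add1n ltnS IH.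
Qed.

Lemma chg_fix f0 s (v : V) : v \notin chg f0 s -> forall f, f \in f0 :: s -> f v = f0 v.
Proof.
elim: s f0 => [|f1 s IH] f0 /=; first by move=> _ f; rewrite inE => /eqP ->.
rewrite !inE negb_or negbK => /andP [/eqP E Hv] f; rewrite inE => /orP [/eqP -> //|Hf].
by rewrite E (IH f1 Hv f Hf).
Qed.

Lemma seq_lemma (X : eqType) (P Q : pred X) (R : rel X) (x0 : X) (l : seq X) :
  (forall x y, R x y -> P x -> Q y) -> P x0 -> ~~ P (last x0 l) -> path R x0 l ->
  exists2 y, y \in l & ~~ P y && Q y.
Proof.
move=> HR; elim: l x0 => [|y l IH] x0 HP; first by rewrite /= HP.
move=> /= Hl /andP [Rxy Hp]; case Py: (P y).
  by have [z Hz Hz2] := IH y Py Hl Hp; exists z => //; rewrite inE Hz orbT.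
by exists y; rewrite ?inE ?eqxx //= Py (HR _ _ Rxy HP).
Qed.

End Main.

Section Main2.
Variables (n t : nat) (e : rel 'I_n).
Local Notation V := (vertG' n t).
Local Notation col := (coloring n t).
Variable f : col.
Hypothesis Hp : Defs.proper e f.
Hypothesis HU : forall m : 'I_(n + t + 1), exists x : 'I_(2 * t + 2 * t ^ 2),
  f (inr (m, x)) = inord (val m).

Lemma gcol (i : 'I_n) : val (f (gv t i)) = i \/ val (f (gv t i)) = n + t.
Proof.
set k := f (gv t i).
have hk : val k < n + t + 1 by rewrite addn1 ltn_ord.
case: (eqVneq (val k) i) => [->|ni]; first by left.
case: (eqVneq (val k) (n + t)) => [->|nt]; first by right.
have [x Hx] := HU (Ordinal hk).
have := @prop_adj _ _ _ _ (gv t i) (inr (Ordinal hk, x)) Hp.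
by rewrite /= ni nt Hx inord_val eqxx => /(_ isT).
Qed.

Lemma bnot (r c : 'I_t) : val (f (bv n r c)) != n + t.
Proof.
apply/negP => /eqP E.
have hk : n + t < n + t + 1 by rewrite addn1.
have [x Hx] := HU (Ordinal hk).
have := @prop_adj _ _ _ _ (bv n r c) (inr (Ordinal hk, x)) Hp.
have E' : f (bv n r c) = inord (n + t) by apply: val_inj; rewrite /= E inordK.
by rewrite /= eqxx Hx /= E' eqxx => /(_ isT).
Qed.

Lemma bsmall (r c : 'I_t) (H : val (f (bv n r c)) < n) : Ordinal H \in SG f.
Proof.
rewrite inE; case: (gcol (Ordinal H)) => [E|->]; last by rewrite eqxx.
have E' : f (gv t (Ordinal H)) = f (bv n r c) by apply: val_inj.
by have := @prop_adj _ _ _ _ (gv t (Ordinal H)) (bv n r c) Hp; rewrite E' eqxx => /(_ isT).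
Qed.

Lemma cset_bound : #|cset (hB f)| <= t + #|SG f|.
Proof.
pose X1 := [set (inord (n + val r) : 'I_(n + t).+1) | r : 'I_t].
pose X2 := [set (inord (val i) : 'I_(n + t).+1) | i in SG f].
have sub : cset (hB f) \subset X1 :|: X2.
  apply/subsetP => x; rewrite inE => /existsP [r /existsP [c /eqP Hx]].
  subst x; rewrite inE; case: (ltnP (val (hB f r c)) n) => [Hlt|Hge].
    apply/orP; right; apply/imsetP; exists (Ordinal Hlt).
      exact: bsmall.
    by rewrite /= inord_val.
  have hlt : val (hB f r c) - n < t.
    have := bnot r c; rewrite /hB in Hge *.
    have H1 : val (f (bv n r c)) < (n + t).+1 := ltn_ord _. lia.
  apply/orP; left; apply/imsetP; exists (Ordinal hlt) => //=.
  by rewrite subnKC // inord_val.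
apply: leq_trans (subset_leq_card sub) _.
rewrite cardsU; apply: leq_trans (leq_subr _ _) _.
apply: leq_add.
  by apply: leq_trans (leq_imset_card _ _) _; rewrite card_ord.
exact: leq_imset_card.
Qed.

End Main2.

Unset Implicit Arguments. Set Strict Implicit.
Theorem mainTheorem4 (n t : nat) (e : rel 'I_n)
  (e_sym : symmetric e) (e_irr : irreflexive e) (ht : 1 <= t) :
  (exists s : seq (coloring n t),
      reconf_path e s /\ size s <= 2 * t + 2 * t ^ 2) ->
  exists S : {set 'I_n}, independent e S /\ t - 1 <= #|S|.
Proof.
move=> [s [Hrp Hsz]].
case: (leqP t 1) => Ht1.
  exists set0; split; last by rewrite cards0; lia.
  by apply/forallP => x; apply/implyP; rewrite inE.
move/and3P: Hrp => [Hall Hpath /eqP Hlast].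
have t0 : 0 < t by lia.
pose r0 : 'I_t := Ordinal t0. pose r1 : 'I_t := Ordinal Ht1.
pose D := chg (alpha n t) s.
have fixD : forall v, v \notin D -> forall f, f \in alpha n t :: s -> f v = alpha n t v.
  by move=> v H; apply: chg_fix.
have b01 : bv n r0 r1 \in D.
  apply: contraT => H; have := fixD _ H (last (alpha n t) s) (mem_last _ _).
  rewrite Hlast /beta /alpha !ffunE /= => /(congr1 val).
  rewrite /= !inordK; lia.
have HU : forall f, f \in alpha n t :: s -> forall m : 'I_(n + t + 1),
    exists x : 'I_(2 * t + 2 * t ^ 2), f (inr (m, x)) = inord (val m).
  move=> f Hf m.
  case: (pickP [pred x : 'I_(2 * t + 2 * t ^ 2) | inr (m, x) \notin D]) => [x Hx|H].
    by exists x; rewrite (fixD _ Hx f Hf) /alpha ffunE.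
  exfalso.
  have sub : bv n r0 r1 |: [set (inr (m, x) : vertG' n t) | x : 'I_(2 * t + 2 * t ^ 2)]
      \subset D.
    rewrite subUset sub1set b01 /=; apply/subsetP => v /imsetP [x _ ->].
    by move: (H x) => /= /negbFE.
  have nin : bv n r0 r1 \notin
      [set (inr (m, x) : vertG' n t) | x : 'I_(2 * t + 2 * t ^ 2)].
    by apply/imsetP => -[x _ E]; rewrite /bv in E.
  have := subset_leq_card sub; rewrite cardsU1 card_imset; last by move=> x y [].
  rewrite nin card_ord; have := chg_card Hpath; rewrite -/D; lia.
have HR : forall f g : coloring n t, recolor_adj f g ->
    [forall r, rowA (hB f) r] -> t - 1 <= #|[set r | rowA (hB g) r]|.
  move=> f g /cards1P [v Hv] /forallP Pf.
  have eq : forall w, w != v -> f w = g w.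
    by move=> w nw; apply/eqP; apply: contraNT nw => nfw; rewrite -in_set1 -Hv inE.
  have [rr Hrr] : exists rr : 'I_t, forall r c, r != rr -> f (bv n r c) = g (bv n r c).
    case: v Hv eq => [[i|[r' c']]|[m x]] _ eq.
    - by exists r0 => r c _; apply: eq.
    - exists r' => r c nr; apply: eq; apply: contra nr => /eqP [-> _]; exact: eqxx.
    - by exists r0 => r c _; apply: eq.
  have sub : [set~ rr] \subset [set r | rowA (hB g) r].
    apply/subsetP => r; rewrite !inE => nr.
    move: (Pf r) => /existsP [c1 /existsP [c2 /andP [nc /eqP E]]].
    apply/existsP; exists c1; apply/existsP; exists c2.
    by rewrite nc /hB -(Hrr r c1 nr) -(Hrr r c2 nr); rewrite /hB in E; rewrite E eqxx.
  by apply: leq_trans (subset_leq_card sub); rewrite cardsC1 card_ord subn1.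
have HP0 : [forall r, rowA (hB (alpha n t)) r].
  apply/forallP => r; apply/existsP; exists r0; apply/existsP; exists r1.
  by rewrite /hB /alpha !ffunE /= eqxx.
have HPl : ~~ [forall r, rowA (hB (last (alpha n t) s)) r].
  rewrite Hlast; apply/forallPn; exists r0.
  apply/negP => /existsP [c1 /existsP [c2 /andP [nc /eqP E]]].
  move: E; rewrite /hB /beta !ffunE /= => /(congr1 val); have l1 := ltn_ord c1; have l2 := ltn_ord c2.
  rewrite /= !inordK => [E||]; try lia.
  have : c1 == c2 by rewrite -val_eqE /=; apply/eqP; lia.
  by rewrite (negbTE nc).
have [y Hy /andP [nPy Qy]] := seq_lemma
  (P := fun f : coloring n t => [forall r, rowA (hB f) r])
  (Q := fun g : coloring n t => t - 1 <= #|[set r | rowA (hB g) r]|) HR HP0 HPl Hpath.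
have Hyy : y \in alpha n t :: s by rewrite inE Hy orbT.
have Hpy : Defs.proper e y := allP Hall y Hyy.
have cb := cset_bound Hpy (HU y Hyy).
have ncount : t + (t - 1) <= #|cset (hB y)|.
  move/forallPn: nPy => [rr nr].
  case: (boolP [forall c, colA (hB y) c]) => [/forallP Hc | /forallPn [cc nc]].
    have := act_count (Bprop_hB Hpy).
    have -> : [set c | colA (hB y) c] = setT by apply/setP => c; rewrite !inE Hc.
    rewrite cardsT card_ord; move: Qy => /= Qy; lia.
  exact: cross (Bprop_hB Hpy) nr nc.
exists (SG y); split; last by lia.
apply/forallP => x; apply/implyP; rewrite inE => /eqP Hx.
apply/forallP => z; apply/implyP; rewrite inE => /eqP Hz.
apply/negP => Exz.
have := @prop_adj _ _ _ _ (gv t x) (gv t z) Hpy Exz.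
have -> : y (gv t x) = y (gv t z) by apply: val_inj; rewrite Hx Hz.
by rewrite eqxx.
Qed.
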